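(* The relation $\equiv_{\mathrm{lps}}$ on $\mathcal{A}^*$ is the smallest congruence on $\mathcal{A}^*$ containing $\mathcal{R}_{\mathrm{lps}}$, and the relation $\equiv_{\mathrm{rps}}$ on $\mathcal{A}^*$ is the smallest congruence on $\mathcal{A}^*$ containing $\mathcal{R}_{\mathrm{rps}}$.
   Context: Let $\mathcal{A}=\{1<2<3<\cdots\}$ be the positive integers viewed as a totally ordered alphabet. An lPS tableau is a finite (possibly empty) sequence of nonempty bottom-justified columns of boxes filled with elements of $\mathcal{A}$, such that the entries of each column are strictly decreasing from top to bottom and the bottom entries of the columns form a weakly increasing sequence from left to right. An rPS tableau is defined in the same way but with columns weakly decreasing from top to bottom and the bottom row strictly increasing from left to right. Right insertion of a symbol $a$ into an lPS tableau $B$: if $a$ is greater than or equal to every entry of the bottom row, append a new column consisting of $a$ at the right end; otherwise, let $z$ be the leftmost bottom-row entry with $z>a$ and put $a$ in a new box at the bottom of the column of $z$ (the previous entries of that column move up one box). Right insertion into an rPS tableau is the same except that a new column is created iff $a$ is strictly greater than every bottom-row entry, and otherwise $z$ is the leftmost bottom-row entry with $z\geq a$. For a word $w=w_1\cdots w_k$, $\mathfrak{R}_\ell(w)$ (resp. $\mathfrak{R}_r(w)$) is obtained by starting with the empty lPS (resp. rPS) tableau and right-inserting $w_1,\dots,w_k$ in order. Define $u\equiv_{\mathrm{lps}}v\iff\mathfrak{R}_\ell(u)=\mathfrak{R}_\ell(v)$ and $u\equiv_{\mathrm{rps}}v\iff\mathfrak{R}_r(u)=\mathfrak{R}_r(v)$.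 $\mathcal{R}_{\mathrm{lps}}=\{(yux,yxu): m\geq1,\ x,y,u_1,\dots,u_m\in\mathcal{A},\ u=u_m\cdots u_1,\ x<y\leq u_1<\cdots<u_m\}$ and $\mathcal{R}_{\mathrm{rps}}=\{(yux,yxu): m\geq1,\ x,y,u_1,\dots,u_m\in\mathcal{A},\ u=u_m\cdots u_1,\ x\leq y<u_1\leq\cdots\leq u_m\}$. *)

(* Defs.v *)
From mathcomp Require Import all_boot.
Set Implicit Arguments. Unset Strict Implicit. Unset Printing Implicit Defensive.

Definition letter := {n : nat | 0 < n}.
Definition word := seq letter.
Definition ltA (a b : letter) : bool := val a < val b.
Definition leA (a b : letter) : bool := val a <= val b.

(* A PS tableau: a sequence of columns (left to right); each column is a
   nonempty sequence of letters listed from TOP to BOTTOM, so the bottom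
   entry of a column c is its last element. *)
Definition column := seq letter.
Definition tableau := seq column.
Definition bottom (c : column) (d : letter) : letter := last d c.

Fixpoint ins_l (a : letter) (B : tableau) : tableau :=
  match B with
  | [::] => [:: [:: a]]
  | c :: B' => if ltA a (bottom c a) then rcons c a :: B' else c :: ins_l a B'
  end.

Fixpoint ins_r (a : letter) (B : tableau) : tableau :=
  match B with
  | [::] => [:: [:: a]]
  | c :: B' => if leA a (bottom c a) then rcons c a :: B' else c :: ins_r a B'
  end.

Definition Rl (w : word) : tableau := foldl (fun B a => ins_l a B) [::] w.
Definition Rr (w : word) : tableau := foldl (fun B a => ins_r a B) [::] w.

Definition lps_equiv (u v : word) : Prop := Rl u = Rl v.
Definition rps_equiv (u v : word) : Prop := Rr u = Rr v.

(* The defining relations.  us = [:: u_1; ...; u_m], and u = u_m ... u_1 = rev us. *)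
Definition R_lps (p q : word) : Prop :=
  exists (x y : letter) (us : seq letter),
    [/\ us != [::],
        sorted ltA us,
        ltA x y && leA y (head y us),
        p = y :: rev us ++ [:: x]
      & q = [:: y; x] ++ rev us].

Definition R_rps (p q : word) : Prop :=
  exists (x y : letter) (us : seq letter),
    [/\ us != [::],
        sorted leA us,
        leA x y && ltA y (head y us),
        p = y :: rev us ++ [:: x]
      & q = [:: y; x] ++ rev us].

Definition is_congruence (C : word -> word -> Prop) : Prop :=
  [/\ forall u, C u u,
      forall u v, C u v -> C v u,
      forall u v w, C u v -> C v w -> C u w
    & forall u v s t, C u v -> C s t -> C (u ++ s) (v ++ t)].

Definition cong_closure (R : word -> word -> Prop) (u v : word) : Prop :=
  forall C, is_congruence C -> (forall p q, R p q -> C p q) -> C u v.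

(* Main.v *)
Require Import Defs.
From mathcomp Require Import all_boot.
From mathcomp Require Import all_boot zify.

Record good (s w : rel letter) : Prop := Good {
  g_not : forall a b, ~~ s a b -> w b a;
  g_tr1 : forall a y b, s a y -> w y b -> s a b;
  g_tr2 : forall a b n, s a b -> w b n -> w a n;
  g_tr3 : forall y a b, w y a -> s a b -> w y b;
  g_wS : forall y u, w y u -> ~~ s u y;
  g_xu : forall x y u, s x y -> w y u -> ~~ s u x;
  g_b : forall y u b, w y u -> ~~ s y b -> ~~ s u b }.

Arguments g_not {s w} _ {a b}. Arguments g_tr1 {s w} _ {a y b}. Arguments g_tr2 {s w} _ {a b n}. Arguments g_tr3 {s w} _ {y a b}.
Arguments g_wS {s w} _ {y u}. Arguments g_xu {s w} _ {x y u}. Arguments g_b {s w} _ {y u b}.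

Lemma good_l : good ltA leA.
Proof. split; rewrite /ltA /leA => *; lia. Qed.
Lemma good_r : good leA ltA.
Proof. split; rewrite /ltA /leA => *; lia. Qed.

Fixpoint insg (s : rel letter) (a : letter) (B : tableau) : tableau :=
  match B with
  | [::] => [:: [:: a]]
  | c :: B' => if s a (bottom c a) then rcons c a :: B' else c :: insg s a B'
  end.

Notation foldg s B0 u := (foldl (fun T a => insg s a T) B0 u).

Definition Rg (s w : rel letter) (p q : word) : Prop :=
  exists (x y : letter) (us : seq letter),
    [/\ us != [::], sorted s us, s x y && w y (head y us),
        p = y :: rev us ++ [:: x] & q = [:: y; x] ++ rev us].

Lemma Rl_eq u : Rl u = foldg ltA [::] u.
Proof.
rewrite /Rl; elim: u [::] => //= a u IH B; rewrite IH; congr foldl.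
by elim: B => //= c B ->.
Qed.
Lemma Rr_eq u : Rr u = foldg leA [::] u.
Proof.
rewrite /Rr; elim: u [::] => //= a u IH B; rewrite IH; congr foldl.
by elim: B => //= c B ->.
Qed.

Definition ne (c : column) := c != [::].

Lemma pass s c0 c' B u : (forall a, a \in u -> ~~ s a (last c0 c')) ->
  foldg s ((c0 :: c') :: B) u = (c0 :: c') :: foldg s B u.
Proof.
elim: u B => //= a u IH B H.
rewrite /bottom /= (negbTE (H a _)) ?inE ?eqxx //.
apply: IH => b hb; apply: H; by rewrite inE hb orbT.
Qed.

Lemma commute s w (G : good s w) B x y u : all ne B -> s x y ->
  (forall a, a \in u -> w y a) ->
  foldg s B (y :: u ++ [:: x]) = foldg s B (y :: x :: u).
Proof.
case: G => Gnot G1 G2 G3 GwS Gxu Gb.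
move=> + sxy Hu; elim: B => [|c B IH] /=.
  rewrite foldl_cat (pass _ y [::]) /=; last by move=> a /Hu /GwS.
  rewrite /bottom /= sxy (pass _ y [:: x]) //=.
  by move=> a /Hu /(Gxu _ _ _ sxy).
case: c => [|c0 c'] //= neB.
rewrite /bottom /=.
case: ifP => syb.
  rewrite foldl_cat (pass _ c0 (rcons c' y)) /=; last by move=> a /Hu /GwS; rewrite last_rcons.
  rewrite /bottom /= last_rcons sxy (pass _ c0 (rcons (rcons c' y) x)) //.
  by move=> a /Hu /(Gxu _ _ _ sxy); rewrite last_rcons.
have Hb' : forall a, a \in u -> ~~ s a (last c0 c').
  by move=> a /Hu /Gb; apply; rewrite syb.
rewrite foldl_cat (pass _ c0 c') //= /bottom /=.
case: ifP => sxb.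
  by rewrite (pass _ c0 (rcons c' x)) // => a /Hu /(Gxu _ _ _ sxy); rewrite last_rcons.
rewrite (pass _ c0 c') //; congr cons.
have := IH neB; rewrite /= foldl_cat /=; done.
Qed.


Lemma ins_ne s a B : all ne B -> all ne (insg s a B).
Proof.
elim: B => //= c B IH /andP[nc nB]; case: ifP => _ /=.
  by rewrite nB andbT /ne; case: c {nc}.
by rewrite nc IH.
Qed.

Lemma fold_ne s B u : all ne B -> all ne (foldg s B u).
Proof. by elim: u B => //= a u IH B nB; apply/IH/ins_ne. Qed.

Lemma dir1 s w (G : good s w) u v : cong_closure (Rg s w) u v ->
  foldg s [::] u = foldg s [::] v.
Proof.
move=> H.
have : forall B, all ne B -> foldg s B u = foldg s B v; last by apply.
apply: (H (fun u v => forall B, all ne B -> foldg s B u = foldg s B v)).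
- split.
  + by [].
  + by move=> ? ? H0 B nB; rewrite H0.
  + by move=> ? ? ? H1 H2 B nB; rewrite H1 // H2.
  + move=> u1 v1 s1 t1 H1 H2 B nB; rewrite !foldl_cat H1 // H2 //.
    exact: fold_ne.
- move=> p q [x [y [us [usn sus /andP[sxy wyu] -> ->]]]] B nB.
  rewrite (commute _ _ G) //= => a; rewrite mem_rev.
  case: us usn sus wyu {p q} => //= u1 us _ sus wyu.
  rewrite inE => /orP[/eqP -> //|].
  elim: us u1 sus wyu => //= u2 us IH u1 /andP[s12 sus] wyu.
  rewrite inE => /orP[/eqP ->|]; first exact: (g_tr3 G wyu s12).
  exact: (IH u2 sus (g_tr3 G wyu s12)).
Qed.


Lemma cc_refl R u : cong_closure R u u.
Proof. by move=> C [r ? ? ?] _; apply: r. Qed.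
Lemma cc_sym R u v : cong_closure R u v -> cong_closure R v u.
Proof. move=> H C hC HR; case: (hC) => _ sy _ _; apply: sy; exact: H. Qed.
Lemma cc_trans R u v w : cong_closure R u v -> cong_closure R v w -> cong_closure R u w.
Proof. move=> H1 H2 C hC HR; case: (hC) => _ _ t _; exact: t (H1 C hC HR) (H2 C hC HR). Qed.
Lemma cc_cat R u v s t : cong_closure R u v -> cong_closure R s t ->
  cong_closure R (u ++ s) (v ++ t).
Proof. move=> H1 H2 C hC HR; case: (hC) => _ _ _ c; exact: c (H1 C hC HR) (H2 C hC HR). Qed.
Lemma cc_R (R : word -> word -> Prop) u v : R u v -> cong_closure R u v.
Proof. by move=> H C _ HR; apply: HR. Qed.
Lemma cc_catl R p u v : cong_closure R u v -> cong_closure R (p ++ u) (p ++ v).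
Proof. by move=> H; apply: cc_cat (cc_refl _ _) H. Qed.

Arguments cc_refl {R}. Arguments cc_sym {R u v}. Arguments cc_trans {R u} v {w}.
Arguments cc_cat {R u v s t}. Arguments cc_R {R u v}. Arguments cc_catl {R} p {u v}.

Definition d0 : letter := exist _ 1 isT.
Definition bot (c : column) := last d0 c.
Definition colsorted s (c : column) := sorted s (rev c).

Lemma M s w (G : good s w) B y a : s a y -> all ne B -> all (colsorted s) B ->
  path w y (map bot B) ->
  cong_closure (Rg s w) (y :: flatten B ++ [:: a]) (y :: a :: flatten B).
Proof.
elim: B y => [|c B IH] y say; first by move=> *; apply: cc_refl.
case: c => [|c0 c'] // /andP[_ nB] /andP[cs csB] /andP[wyb pB].
rewrite /bot /= in wyb.
have sab := g_tr1 G say wyb.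
have pB' : path w (last c0 c') (map bot B) := pB.
have H := cc_catl (y :: belast c0 c') (IH _ sab nB csB pB').
rewrite /colsorted (lastI c0 c') in cs.
move: H cs; rewrite (lastI c0 c').
set bl := belast c0 c'; set b := last c0 c' => H cs /=.
rewrite !cat_rcons -catA /=.
apply: (cc_trans ((y :: bl) ++ [:: b, a & flatten B])); first exact: H.
have E1 : y :: bl ++ [:: b, a & flatten B] = (y :: rev (rev (rcons bl b)) ++ [:: a]) ++ flatten B.
  by rewrite revK cat_rcons /= -catA.
have E2 : [:: y, a & bl ++ b :: flatten B] = ([:: y; a] ++ rev (rev (rcons bl b))) ++ flatten B.
  by rewrite revK /= -cats1 -catA.
rewrite cat_cons E1 E2; apply: cc_cat (cc_refl _).
apply: cc_R; exists a, y, (rev (rcons bl b)); split => //.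
  by rewrite rev_rcons.
by rewrite rev_rcons /= say.
Qed.

Arguments M {s w} G {B y a}.

Lemma core s w (G : good s w) B a : all ne B -> all (colsorted s) B ->
  sorted w (map bot B) ->
  cong_closure (Rg s w) (flatten B ++ [:: a]) (flatten (insg s a B)).
Proof.
elim: B => [|c B IH]; first by move=> *; apply: cc_refl.
case: c => [|c0 c'] // /andP[_ nB] /andP[cs csB] pB.
have pB' : path w (last c0 c') (map bot B) := pB.
rewrite /= /bottom /=.
case: ifP => sab.
  have H := cc_catl (belast c0 c') (M G sab nB csB pB').
  have E X : c0 :: c' ++ X = belast c0 c' ++ last c0 c' :: X.
    by rewrite -cat_cons lastI cat_rcons.
  by rewrite /= -catA E cat_rcons E.
rewrite /= -catA -cat_cons; apply: (cc_catl (c0 :: c')); apply: IH => //.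
exact: path_sorted pB'.
Qed.

Lemma ins_cs s w (G : good s w) a B : all ne B -> all (colsorted s) B ->
  all (colsorted s) (insg s a B).
Proof.
elim: B => [|c B IH] //.
case: c => [|c0 c'] // /andP[_ nB] /andP[cs csB].
have csB' : all (colsorted s) B := csB.
rewrite /= /bottom /=; case: ifP => sab /=.
  rewrite csB' andbT /colsorted rev_cons -/(rcons _ _) rev_rcons /=.
  rewrite -rev_cons (lastI c0 c') rev_rcons /= sab.
  by move: cs; rewrite /colsorted (lastI c0 c') rev_rcons.
by apply/andP; split => //; apply: IH.
Qed.

Lemma ins_bot s w (G : good s w) a B : all ne B ->
  (sorted w (map bot B) -> sorted w (map bot (insg s a B))) /\
  (forall p, path w p (map bot B) -> w p a -> path w p (map bot (insg s a B))).
Proof.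
elim: B => [|c B IH]; first by split => // p _ /= ->.
case: c => [|c0 c'] // /andP[_ nB].
have [IH1 IH2] := IH nB.
rewrite /= /bottom /=; case: ifP => sab /=.
  have -> : bot (c0 :: rcons c' a) = a by rewrite /bot /= last_rcons.
  have H : path w (last c0 c') (map bot B) -> path w a (map bot B).
    case: (B) => //= c2 B2 /andP[h1 h2]; rewrite h2 andbT.
    exact: (g_tr2 G sab h1).
  split; first exact: H.
  by move=> p /andP[_ h] ->; rewrite H.
have wba := g_not G (negbT sab).
split; first by move=> h; apply: IH2.
by move=> p /andP[h1 h2] wpa; rewrite h1 IH2.
Qed.

Arguments core {s w} G {B} a.
Arguments ins_cs {s w} G a {B}.
Arguments ins_bot {s w} G a {B}.

Lemma main s w (G : good s w) u :
  [/\ all ne (foldg s [::] u), all (colsorted s) (foldg s [::] u),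
      sorted w (map bot (foldg s [::] u))
    & cong_closure (Rg s w) u (flatten (foldg s [::] u))].
Proof.
elim/last_ind: u => [|u a [nT cT sT cc]]; first by split => //; apply: cc_refl.
rewrite foldl_rcons; split.
- exact: ins_ne.
- exact: (ins_cs G a nT cT).
- exact: (ins_bot G a nT).1 sT.
rewrite -cats1; apply: (cc_trans (flatten (foldg s [::] u) ++ [:: a])).
  exact: cc_cat cc (cc_refl _).
exact: (core G a nT cT sT).
Qed.

Arguments main {s w} G u.

Lemma dir2 s w (G : good s w) u v : foldg s [::] u = foldg s [::] v ->
  cong_closure (Rg s w) u v.
Proof.
move=> E; have [_ _ _ cu] := main G u; have [_ _ _ cv] := main G v.
apply: (cc_trans _ cu); rewrite E; exact: cc_sym.
Qed.

Theorem theorem3p23 :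
  (forall u v : word, lps_equiv u v <-> cong_closure R_lps u v) /\
  (forall u v : word, rps_equiv u v <-> cong_closure R_rps u v).
Proof.
split=> u v; rewrite /lps_equiv /rps_equiv ?Rl_eq ?Rr_eq; split.
- move=> E; have := dir2 _ _ good_l u v E. move=> H. exact H.
- exact: (dir1 _ _ good_l u v).
- exact: (dir2 _ _ good_r u v).
- exact: (dir1 _ _ good_r u v).
Qed.
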